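(* Let $k>0$, $\mu>0$ and define, for a second-rank tensor $\mathbf A$ on $\mathbb{R}^3$ with $\det\mathbf A>0$, $$\rho_{\mathrm R}\psi_{\mathrm{el}}(\mathbf A):=\frac{k}{2}\Big(\ln\sqrt{\det\mathbf A}\Big)^2+\frac{\mu}{2}\Big(\operatorname{tr}\big((\det\mathbf A)^{-1/3}\mathbf A\big)-3\Big).$$ Let $M$ be the set of symmetric positive definite second-rank tensors on $\mathbb{R}^3$ with determinant $1$, and for $\mathbf C^{(1)},\mathbf C^{(2)}\in M$ put $\mathrm{Dist}(\mathbf C^{(1)},\mathbf C^{(2)}):=\sqrt{\rho_{\mathrm R}\psi_{\mathrm{el}}\big(\mathbf C^{(1)}(\mathbf C^{(2)})^{-1}\big)}$. Let $L<\infty$. Then there exist constants $\varepsilon>0$, $C_3>0$ and $C_4<\infty$ such that for all $\mathbf C^{(1)},\mathbf C^{(2)}\in M$ satisfying $\|(\mathbf C^{(j)})^{1/2}\|<L$ and $\|(\mathbf C^{(j)})^{-1/2}\|<L$ for $j\in\{1,2\}$ and $\|\mathbf C^{(1)}-\mathbf C^{(2)}\|\le\varepsilon$, one has $$C_3\,\|\mathbf C^{(1)}-\mathbf C^{(2)}\|\le \mathrm{Dist}(\mathbf C^{(1)},\mathbf C^{(2)})\le C_4\,\|\mathbf C^{(1)}-\mathbf C^{(2)}\|.$$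
   Context: $\|\mathbf A\|=\sqrt{\operatorname{tr}(\mathbf A\mathbf A^{\mathrm T})}$ is the Frobenius norm; $\mathbf C^{1/2}$ is the symmetric positive definite square root. $\rho_{\mathrm R}\psi_{\mathrm{el}}$ is treated as a single function. *)

(* Defs.v *)
From HB Require Import structures.
From mathcomp Require Import all_boot all_order all_algebra.
From mathcomp Require Import all_classical all_reals all_analysis.
Set Implicit Arguments. Unset Strict Implicit. Unset Printing Implicit Defensive.
Import Order.TTheory GRing.Theory Num.Theory.
Local Open Scope classical_set_scope.
Local Open Scope ring_scope.

Definition frob {R : realType} (A : 'M[R]_3) : R := Num.sqrt (\tr (A *m A^T)).

Definition spd {R : realType} (A : 'M[R]_3) : Prop :=
  A^T = A /\ forall v : 'rV[R]_3, v != 0 -> 0 < (v *m A *m v^T) 0 0.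

(* The symmetric positive definite square root C^{1/2}: the (unique) SPD S
   with S S = C (chosen classically; C is SPD in all uses). *)
Definition sqrtm {R : realType} (C : 'M[R]_3) : 'M[R]_3 :=
  xget 0 [set S : 'M[R]_3 | spd S /\ S *m S = C].

Definition inM {R : realType} (C : 'M[R]_3) : Prop := spd C /\ \det C = 1.

Definition psi_el {R : realType} (k mu : R) (A : 'M[R]_3) : R :=
  k / 2 * (ln (Num.sqrt (\det A))) ^+ 2
  + mu / 2 * (\tr ((\det A) `^ (- 3^-1) *: A) - 3).

Definition Dist {R : realType} (k mu : R) (C1 C2 : 'M[R]_3) : R :=
  Num.sqrt (psi_el k mu (C1 *m invmx C2)).

(* Main.v *)
Require Import Defs.
From HB Require Import structures.
From mathcomp Require Import all_boot all_order all_algebra.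
From mathcomp Require Import all_classical all_reals all_analysis.
From mathcomp Require Import ring lra.
Import Order.TTheory GRing.Theory Num.Theory.
Local Open Scope ring_scope.
Set Implicit Arguments. Unset Strict Implicit.

Definition i0 : 'I_3 := @Ordinal 3 0 isT.
Definition i1 : 'I_3 := @Ordinal 3 1 isT.
Definition i2 : 'I_3 := @Ordinal 3 2 isT.
Definition j0 : 'I_2 := @Ordinal 2 0 isT.
Definition j1 : 'I_2 := @Ordinal 2 1 isT.

Lemma eqI : ((i0 == i1) = false) * ((i0 == i2) = false) * ((i1 == i0) = false)
  * ((i1 == i2) = false) * ((i2 == i0) = false) * ((i2 == i1) = false)
  * ((i0 == i0) = true) * ((i1 == i1) = true) * ((i2 == i2) = true).
Proof. by []. Qed.

Lemma ord3P (i : 'I_3) : i = i0 \/ i = i1 \/ i = i2.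
Proof.
case: i => [[|[|[|m]]] Hm].
- by left; apply: val_inj.
- by right; left; apply: val_inj.
- by right; right; apply: val_inj.
- by [].
Qed.

Lemma sum3 {R : nmodType} (F : 'I_3 -> R) : \sum_(i < 3) F i = F i0 + F i1 + F i2.
Proof.
rewrite !big_ord_recr big_ord0 /= add0r.
by congr (F _ + F _ + F _); apply: val_inj.
Qed.
Lemma sum2 {R : nmodType} (F : 'I_2 -> R) : \sum_(i < 2) F i = F j0 + F j1.
Proof.
rewrite !big_ord_recr big_ord0 /= add0r.
by congr (F _ + F _); apply: val_inj.
Qed.

Lemma lift_tab :
  (lift i0 j0 = i1 /\ lift i0 j1 = i2) /\ (lift i1 j0 = i0 /\ lift i1 j1 = i2) /\
      (lift i2 j0 = i0 /\ lift i2 j1 = i1).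
Proof. by do !split; apply: val_inj. Qed.
Lemma lift_tab2 : lift j0 (ord0 : 'I_1) = j1 /\ lift j1 (ord0 : 'I_1) = j0.
Proof. by split; apply: val_inj. Qed.

Definition det3 {R : comRingType} (A : 'M[R]_3) : R :=
  A i0 i0 * (A i1 i1 * A i2 i2 - A i1 i2 * A i2 i1)
  - A i0 i1 * (A i1 i0 * A i2 i2 - A i1 i2 * A i2 i0)
  + A i0 i2 * (A i1 i0 * A i2 i1 - A i1 i1 * A i2 i0).

Lemma det3E {R : comRingType} (A : 'M[R]_3) : \det A = det3 A.
Proof.
have [[l1 l2] [[l3 l4] [l5 l6]]] := lift_tab. have [m1 m2] := lift_tab2.
rewrite (expand_det_row _ i0) sum3 /cofactor.
rewrite !(expand_det_row _ j0) !sum2 /cofactor !det_mx11 !mxE.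
rewrite /= ?l1 ?l2 ?l3 ?l4 ?l5 ?l6 ?m1 ?m2 /det3.
rewrite ?l1 ?l2 ?l3 ?l4 ?l5 ?l6 ?add0n ?expr0 ?expr1 ?sqrrN ?expr1n. ring.
Qed.

Lemma mx3P {R : Type} (A B : 'M[R]_3) :
  (forall i j, i \in [:: i0; i1; i2] -> j \in [:: i0; i1; i2] -> A i j = B i j) -> A = B.
Proof.
move=> H; apply/matrixP => i j; apply: H.
- by case: (ord3P i) => [->|[->|->]]; rewrite !inE ?eqI.
- by case: (ord3P j) => [->|[->|->]]; rewrite !inE ?eqI.
Qed.

Ltac mx3 := apply: mx3P => i j;
  rewrite !inE => /orP[/eqP->|/orP[/eqP->|/eqP->]] /orP[/eqP->|/orP[/eqP->|/eqP->]] //.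

Section R.
Variable R : realType.

Definition vec3 (x y z : R) : 'rV[R]_3 :=
  \row_j (if j == i0 then x else if j == i1 then y else z).

Lemma vec3E x y z : ((vec3 x y z) 0 i0 = x) * ((vec3 x y z) 0 i1 = y)
   * ((vec3 x y z) 0 i2 = z).
Proof. by rewrite !mxE !eqI. Qed.

Definition qf (A : 'M[R]_3) (v : 'rV[R]_3) := (v *m A *m v^T) 0 0.

Lemma qfE A v : qf A v = \sum_(j < 3) \sum_(i < 3) v 0 i * A i j * v 0 j.
Proof.
rewrite /qf mxE; apply: eq_bigr => j _; rewrite !mxE big_distrl /=.
by apply: eq_bigr => i _.
Qed.

Lemma symE (A : 'M[R]_3) : A^T = A -> forall i j, A j i = A i j.
Proof. by move=> H i j; rewrite -{1}H mxE. Qed.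

Lemma vec3_neq0 x y z : (x != 0) || (y != 0) || (z != 0) -> vec3 x y z != 0.
Proof.
move=> H; apply/negP => /eqP E.
have := congr1 (fun M : 'rV[R]_3 => (M 0 i0, M 0 i1, M 0 i2)) E.
rewrite !vec3E !mxE => -[ex ey ez]; move: H; by rewrite ex ey ez eqxx.
Qed.

Lemma row_neq0 (v : 'rV[R]_3) : v != 0 -> (v 0 i0 != 0) || (v 0 i1 != 0) || (v 0 i2 != 0).
Proof.
apply: contraNT; rewrite !negb_or !negbK => /andP[/andP[/eqP a /eqP b] /eqP c].
apply/eqP/rowP => j; rewrite mxE.
by case: (ord3P j) => [->|[->|->]].
Qed.

Lemma vec3_eta (v : 'rV[R]_3) : v = vec3 (v 0 i0) (v 0 i1) (v 0 i2).
Proof.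
apply/rowP => j; rewrite mxE.
by case: (ord3P j) => [->|[->|->]]; rewrite !eqI.
Qed.

Definition qf9 (A : 'M[R]_3) x y z :=
  x * A i0 i0 * x + y * A i1 i0 * x + z * A i2 i0 * x
+ x * A i0 i1 * y + y * A i1 i1 * y + z * A i2 i1 * y
+ x * A i0 i2 * z + y * A i1 i2 * z + z * A i2 i2 * z.

Lemma qf9E A v : qf A v = qf9 A (v 0 i0) (v 0 i1) (v 0 i2).
Proof. rewrite qfE !sum3 /qf9; ring. Qed.

Definition sqn (v : 'rV[R]_3) := (v *m v^T) 0 0.
Lemma sqnE v : sqn v = v 0 i0 ^+ 2 + v 0 i1 ^+ 2 + v 0 i2 ^+ 2.
Proof. by rewrite /sqn mxE sum3 !mxE !expr2. Qed.
Lemma sqn_gt0 v : v != 0 -> 0 < sqn v.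
Proof.
move/row_neq0; rewrite sqnE.
move: (v 0 i0) (v 0 i1) (v 0 i2) => a b c.
have ha := sqr_ge0 a; have hb := sqr_ge0 b; have hc := sqr_ge0 c.
case/orP => [/orP[] H|H].
- have : 0 < a ^+ 2 by rewrite exprn_even_gt0.
  lra.
- have : 0 < b ^+ 2 by rewrite exprn_even_gt0.
  lra.
- have : 0 < c ^+ 2 by rewrite exprn_even_gt0.
  lra.
Qed.
Lemma sqn_ge0 v : 0 <= sqn v.
Proof. rewrite sqnE; have := sqr_ge0 (v 0 i0); have := sqr_ge0 (v 0 i1);
  have := sqr_ge0 (v 0 i2); lra. Qed.

Lemma qfD A B v : qf (A + B) v = qf A v + qf B v.
Proof. by rewrite /qf mulmxDr mulmxDl mxE. Qed.
Lemma qfZ a A v : qf (a *: A) v = a * qf A v.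
Proof. by rewrite /qf -scalemxAr -scalemxAl mxE. Qed.
Lemma qf1 v : qf 1%:M v = sqn v.
Proof. by rewrite /qf mulmx1. Qed.
Lemma qfsq A v : A^T = A -> qf (A *m A) v = sqn (v *m A).
Proof. by move=> hA; rewrite /qf /sqn trmx_mul hA !mulmxA. Qed.

Lemma spd_minors (A : 'M[R]_3) : spd A ->
  [/\ 0 < A i0 i0, 0 < A i1 i1, 0 < A i2 i2 &
   0 < (A i0 i0 * A i1 i1 - A i0 i1 * A i1 i0) + (A i0 i0 * A i2 i2 - A i0 i2 * A i2 i0)
     + (A i1 i1 * A i2 i2 - A i1 i2 * A i2 i1)].
Proof.
move=> [hs hp]; have sy := symE hs.
have q (x y z : R) : (x != 0) || (y != 0) || (z != 0) -> 0 < qf9 A x y z.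
  by move=> H; have := hp _ (@vec3_neq0 x y z H); rewrite -/(qf _ _) qf9E !vec3E.
have h0 := q 1 0 0; have h1 := q 0 1 0; have h2 := q 0 0 1.
have d0 : 0 < A i0 i0 by move: h0; rewrite oner_eq0 /= /qf9 => /(_ isT); nra.
have d1 : 0 < A i1 i1 by move: h1; rewrite oner_eq0 /= orbT /qf9 => /(_ isT); nra.
have d2 : 0 < A i2 i2 by move: h2; rewrite oner_eq0 /= orbT /qf9 => /(_ isT); nra.
have lo := (sy i0 i1, sy i0 i2, sy i1 i2).
have m01 : 0 < A i0 i0 * A i1 i1 - A i0 i1 * A i1 i0.
  have := q (A i0 i1) (- A i0 i0) 0; rewrite oppr_eq0 (gt_eqF d0) orbT => /(_ isT).
  have -> : qf9 A (A i0 i1) (- A i0 i0) 0 = A i0 i0 * (A i0 i0 * A i1 i1 - A i0 i1 * A i1 i0).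
    by rewrite /qf9 !lo; ring.
  by rewrite pmulr_rgt0.
have m02 : 0 < A i0 i0 * A i2 i2 - A i0 i2 * A i2 i0.
  have := q (A i0 i2) 0 (- A i0 i0); rewrite oppr_eq0 (gt_eqF d0) orbT => /(_ isT).
  have -> : qf9 A (A i0 i2) 0 (- A i0 i0) = A i0 i0 * (A i0 i0 * A i2 i2 - A i0 i2 * A i2 i0).
    by rewrite /qf9 !lo; ring.
  by rewrite pmulr_rgt0.
have m12 : 0 < A i1 i1 * A i2 i2 - A i1 i2 * A i2 i1.
  have := q 0 (A i1 i2) (- A i1 i1); rewrite oppr_eq0 (gt_eqF d1) orbT => /(_ isT).
  have -> : qf9 A 0 (A i1 i2) (- A i1 i1) = A i1 i1 * (A i1 i1 * A i2 i2 - A i1 i2 * A i2 i1).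
    by rewrite /qf9 !lo; ring.
  by rewrite pmulr_rgt0.
split => //; lra.
Qed.

Definition e1 (C : 'M[R]_3) := C i0 i0 + C i1 i1 + C i2 i2.
Definition e2 (C : 'M[R]_3) :=
  (C i0 i0 * C i1 i1 - C i0 i1 * C i1 i0) + (C i0 i0 * C i2 i2 - C i0 i2 * C i2 i0)
     + (C i1 i1 * C i2 i2 - C i1 i2 * C i2 i1).

Lemma CH_like (C : 'M[R]_3) (s1 s2 : R) :
  (s1 *: C + 1%:M) *m (s1 *: C + 1%:M) - C *m (C + s2%:M) *m (C + s2%:M) =
  (s1 ^+ 2 - e1 C - 2 * s2) *: (C *m C) + (2 * s1 + e2 C - s2 ^+ 2) *: C
  + (1 - det3 C) *: 1%:M.
Proof.
mx3; rewrite !mxE !sum3 !mxE !sum3 !mxE !eqI /= /e1 /e2 /det3 ?mulr1n ?mulr0n; ring.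
Qed.

Lemma PQ_comm (C : 'M[R]_3) (s1 s2 : R) :
  (C + s2%:M) *m (s1 *: C + 1%:M) = (s1 *: C + 1%:M) *m (C + s2%:M).
Proof.
mx3; rewrite !mxE !sum3 !mxE !eqI /= ?mulr1n ?mulr0n; ring.
Qed.

Lemma PQ_expand (C : 'M[R]_3) (s1 s2 : R) :
  (C + s2%:M) *m (s1 *: C + 1%:M) = s1 *: (C *m C) + (1 + s1 * s2) *: C + s2 *: 1%:M.
Proof.
mx3; rewrite !mxE !sum3 !mxE !eqI /= ?mulr1n ?mulr0n; ring.
Qed.

End R.


Section R.
Variable R : realType.
Lemma spd_add_scal (C : 'M[R]_3) (a : R) : spd C -> 0 <= a -> spd (C + a%:M).
Proof.
move=> [hs hp] ha; split.
  by rewrite linearD /= tr_scalar_mx hs.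
move=> v vn0; rewrite -/(qf _ _) -scalemx1 qfD qfZ qf1.
have := hp v vn0; rewrite -/(qf _ _) => h1; have := sqn_ge0 v; nra.
Qed.

Lemma spd_unit (C : 'M[R]_3) : spd C -> C \in unitmx.
Proof.
move=> [hs hp]; rewrite unitmxE unitfE; apply/negP => /det0P [v vn0 vC].
have := hp v vn0; by rewrite vC mul0mx mxE ltxx.
Qed.

Lemma sqrt_exists (C : 'M[R]_3) : inM C -> exists S, spd S /\ S *m S = C.
Proof.
move=> [[hs hp] hd].
have [d0 d1 d2 m] := spd_minors (A:=C) (conj hs hp).
have he2 : 0 < e2 C := m.
have he1 : 0 < e1 C by rewrite /e1; lra.
have hd3 : det3 C = 1 by rewrite -det3E.
pose p : {poly R} := ('X^2 - (e1 C)%:P) ^+ 2 * (4^-1)%:P - (e2 C)%:P - 2%:P * 'X.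
have pE t : p.[t] = (t ^+ 2 - e1 C) ^+ 2 / 4 - e2 C - 2 * t.
  by rewrite /p !hornerE.
pose a := Num.sqrt (e1 C); pose b := e1 C + e2 C + 3.
have ha2 : a ^+ 2 = e1 C by rewrite sqr_sqrtr // ltW.
have ha0 : 0 <= a by rewrite sqrtr_ge0.
have hab : a <= b by rewrite /b; nra.
have hpa : p.[a] <= 0 by rewrite pE ha2 subrr expr0n /= mul0r; lra.
have hpb : 0 <= p.[b].
  rewrite pE.
  have h1 : 2 * b <= b ^+ 2 - e1 C by rewrite /b; nra.
  have h2 : b ^+ 2 <= (b ^+ 2 - e1 C) ^+ 2 / 4 by rewrite /b in h1 *; nra.
  rewrite /b in h2 *; nra.
have [s1 /andP[hs1a hs1b] rt] := poly_ivt hab (introT andP (conj hpa hpb)).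
have Hs1 : (s1 ^+ 2 - e1 C) ^+ 2 / 4 = e2 C + 2 * s1.
  by move/eqP: rt; rewrite /root pE => /eqP; lra.
pose s2 := (s1 ^+ 2 - e1 C) / 2.
have hs2sq : s2 ^+ 2 = e2 C + 2 * s1 by rewrite -Hs1 /s2; field.
have hs20 : 0 <= s2 by rewrite /s2; nra.
have hs2 : 0 < s2.
  rewrite lt_neqAle hs20 andbT; apply/negP => /eqP e.
  by move: hs2sq; rewrite -e expr0n /=; nra.
have hs1 : 0 <= s1 by lra.
pose P := C + s2%:M; pose Q := s1 *: C + 1%:M.
have PQ := PQ_comm C s1 s2; rewrite -/P -/Q in PQ.
have QQ : Q *m Q = C *m P *m P.
  apply/eqP; rewrite -subr_eq0; apply/eqP.
  rewrite CH_like hd3.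
  have -> : s1 ^+ 2 - e1 C - 2 * s2 = 0 by rewrite /s2; field.
  have -> : 2 * s1 + e2 C - s2 ^+ 2 = 0 by rewrite hs2sq; ring.
  by rewrite subrr !scale0r !addr0.
have spdP : spd P by apply: spd_add_scal; [split | exact: ltW].
have Pu : P \in unitmx by apply: spd_unit.
have PT : P^T = P by case: spdP.
have QT : Q^T = Q by rewrite /Q linearD /= linearZ /= tr_scalar_mx hs.
have comm : invmx P *m Q = Q *m invmx P.
  have -> : Q *m invmx P = invmx P *m (P *m Q) *m invmx P by rewrite mulKmx.
  by rewrite PQ !mulmxA mulmxK.
exists (Q *m invmx P); split; last first.
  by rewrite mulmxA -(mulmxA Q) comm mulmxA QQ !mulmxK.
split.
  by rewrite trmx_mul trmx_inv PT QT comm.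
move=> v vn0; rewrite -/(qf _ _).
pose u := v *m invmx P.
have vu : v = u *m P by rewrite /u mulmxKV.
have un0 : u != 0 by apply: contraNneq vn0 => e; rewrite vu e mul0mx.
have -> : qf (Q *m invmx P) v = qf (P *m Q) u.
  rewrite /qf vu trmx_mul PT !mulmxA; congr (_ 0 0); congr (_ *m _).
  by rewrite mulmxKV.
rewrite PQ_expand !qfD !qfZ qf1 qfsq //.
have h1 := sqn_ge0 (u *m C); have h2 := sqn_gt0 un0.
have h3 := hp u un0; rewrite -/(qf _ _) in h3.
have : 0 <= s1 * s2 by apply: mulr_ge0.
nra.
Qed.
End R.

Section R.
Variable R : realType.

Definition fs (A : 'M[R]_3) := \sum_(i < 3) \sum_(j < 3) A i j ^+ 2.

Lemma frobE (A : 'M[R]_3) : frob A = Num.sqrt (fs A).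
Proof.
rewrite /frob /fs /mxtrace; congr Num.sqrt; apply: eq_bigr => i _.
rewrite mxE; apply: eq_bigr => j _; by rewrite mxE expr2.
Qed.

Lemma fs_ge0 (A : 'M[R]_3) : 0 <= fs A.
Proof. by apply: sumr_ge0 => i _; apply: sumr_ge0 => j _; apply: sqr_ge0. Qed.

Lemma frob_ge0 (A : 'M[R]_3) : 0 <= frob A.
Proof. by rewrite frobE sqrtr_ge0. Qed.

Lemma frob_sq (A : 'M[R]_3) : frob A ^+ 2 = fs A.
Proof. by rewrite frobE sqr_sqrtr // fs_ge0. Qed.

Lemma cs3 (a b : 'I_3 -> R) :
  (\sum_(k < 3) a k * b k) ^+ 2 <= (\sum_(k < 3) a k ^+ 2) * (\sum_(k < 3) b k ^+ 2).
Proof.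
rewrite !sum3.
set a0 := a i0; set a1 := a i1; set a2 := a i2; set b0 := b i0; set b1 := b i1; set b2 := b i2.
have E : (a0 ^+ 2 + a1 ^+ 2 + a2 ^+ 2) * (b0 ^+ 2 + b1 ^+ 2 + b2 ^+ 2)
  - (a0 * b0 + a1 * b1 + a2 * b2) ^+ 2 =
  (a0 * b1 - a1 * b0) ^+ 2 + (a0 * b2 - a2 * b0) ^+ 2 + (a1 * b2 - a2 * b1) ^+ 2 by ring.
rewrite -subr_ge0 E.
by apply: addr_ge0; [apply: addr_ge0|]; apply: sqr_ge0.
Qed.

Lemma fs_mul (A B : 'M[R]_3) : fs (A *m B) <= fs A * fs B.
Proof.
rewrite /fs.
apply: (@le_trans _ _ (\sum_(i < 3) \sum_(j < 3)
   ((\sum_(k < 3) A i k ^+ 2) * (\sum_(k < 3) B k j ^+ 2)))).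
  apply: ler_sum => i _; apply: ler_sum => j _; rewrite mxE; exact: cs3.
rewrite big_distrl /=; apply: ler_sum => i _.
rewrite [X in _ <= _ * X]exchange_big big_distrr /=.
by apply: ler_sum => j _.
Qed.

Lemma frob_mul (A B : 'M[R]_3) : frob (A *m B) <= frob A * frob B.
Proof.
rewrite !frobE -sqrtrM ?fs_ge0 //; rewrite ler_sqrt; last by apply: mulr_ge0; apply: fs_ge0.
exact: fs_mul.
Qed.

Lemma triple (a b c r : R) : `|a| <= r -> `|b| <= r -> `|c| <= r ->
  - r ^+ 3 <= a * b * c <= r ^+ 3.
Proof.
move=> ha hb hc; rewrite -ler_norml !normrM !exprS expr0 mulr1 mulrA.
apply: ler_pM => //; exact: ler_pM.
Qed.

Lemma scalar_main (s r d : R) : 0 <= r -> r <= 1/24 -> - (3 * r) <= s -> s <= 3 * r ->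
  - (6 * r ^+ 3) <= d -> d <= 6 * r ^+ 3 -> s + (s ^+ 2 - r ^+ 2) / 2 + d = 0 ->
  r ^+ 2 / 8 <= s /\ s <= r ^+ 2.
Proof.
move=> r0 r24 s1 s2 d1 d2 E.
have r3 : 6 * r ^+ 3 <= r ^+ 2 / 4.
  rewrite !exprS expr0 !mulr1; have : 0 <= r * r by nra. nra.
have f : s * (1 + s / 2) = r ^+ 2 / 2 - d.
  have -> : d = - (s + (s ^+ 2 - r ^+ 2) / 2) by lra.
  ring.
have pos : 0 <= s * (1 + s / 2) by rewrite f; lra.
have hs0 : 0 <= s.
  have h1 : 0 < 1 + s / 2 by nra.
  by rewrite -(pmulr_lge0 _ h1).
have up : s <= r ^+ 2.
  have : s <= s * (1 + s / 2) by nra.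
  rewrite f; lra.
split => //.
have ss : s ^+ 2 <= r ^+ 4.
  rewrite (_ : r ^+ 4 = r ^+ 2 * r ^+ 2); last by rewrite -exprD.
  by rewrite expr2; apply: ler_pM.
have r4 : r ^+ 4 <= r ^+ 2 / 4.
  rewrite (_ : r ^+ 4 = r ^+ 2 * r ^+ 2); last by rewrite -exprD.
  have : r ^+ 2 <= 1/4 by rewrite expr2; nra.
  have := sqr_ge0 r. nra.
have -> : s = r ^+ 2 / 2 - d - s ^+ 2 / 2 by move: f; rewrite expr2; lra.
lra.
Qed.

Lemma Y_main (Y : 'M[R]_3) : Y^T = Y -> det3 (Y + 1%:M) = 1 -> frob Y <= 1/24 ->
  frob Y ^+ 2 / 8 <= \tr Y /\ \tr Y <= frob Y ^+ 2.
Proof.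
move=> hs hd hr.
have sy := symE hs.
have lo := (sy i0 i1, sy i0 i2, sy i1 i2).
set r := frob Y.
have r0 : 0 <= r := frob_ge0 Y.
have fsE : fs Y = Y i0 i0 ^+ 2 + Y i1 i1 ^+ 2 + Y i2 i2 ^+ 2
   + 2 * Y i0 i1 ^+ 2 + 2 * Y i0 i2 ^+ 2 + 2 * Y i1 i2 ^+ 2.
  by rewrite /fs !sum3 !lo; ring.
have r2 : r ^+ 2 = fs Y := frob_sq Y.
have bnd i j : `|Y i j| <= r.
  rewrite -sqrtr_sqr /r frobE ler_sqrt ?fs_ge0 //.
  have q := (sqr_ge0 (Y i0 i0), sqr_ge0 (Y i1 i1), sqr_ge0 (Y i2 i2),
             sqr_ge0 (Y i0 i1), sqr_ge0 (Y i0 i2), sqr_ge0 (Y i1 i2)).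
  case: q => [[[[[q1 q2] q3] q4] q5] q6].
  by case: (ord3P i) => [->|[->|->]]; case: (ord3P j) => [->|[->|->]];
     rewrite ?lo fsE; lra.
have trE : \tr Y = Y i0 i0 + Y i1 i1 + Y i2 i2 by rewrite /mxtrace sum3.
have dE : det3 (Y + 1%:M) = 1 + \tr Y + ((\tr Y) ^+ 2 - fs Y) / 2 + det3 Y.
  rewrite trE fsE /det3 !mxE !eqI /= ?mulr1n ?mulr0n !lo; by field.
have hdY : - (6 * r ^+ 3) <= det3 Y /\ det3 Y <= 6 * r ^+ 3.
  have -> : det3 Y = Y i0 i0 * Y i1 i1 * Y i2 i2 - Y i0 i0 * Y i1 i2 * Y i2 i1
     - Y i0 i1 * Y i1 i0 * Y i2 i2 + Y i0 i1 * Y i1 i2 * Y i2 i0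
     + Y i0 i2 * Y i1 i0 * Y i2 i1 - Y i0 i2 * Y i1 i1 * Y i2 i0 by rewrite /det3; ring.
  have t1 := triple (bnd i0 i0) (bnd i1 i1) (bnd i2 i2).
  have t2 := triple (bnd i0 i0) (bnd i1 i2) (bnd i2 i1).
  have t3 := triple (bnd i0 i1) (bnd i1 i0) (bnd i2 i2).
  have t4 := triple (bnd i0 i1) (bnd i1 i2) (bnd i2 i0).
  have t5 := triple (bnd i0 i2) (bnd i1 i0) (bnd i2 i1).
  have t6 := triple (bnd i0 i2) (bnd i1 i1) (bnd i2 i0).
  move: t1 t2 t3 t4 t5 t6 => /andP[a1 b1] /andP[a2 b2] /andP[a3 b3] /andP[a4 b4]
     /andP[a5 b5] /andP[a6 b6].
  split; lra.
have bs : - (3 * r) <= \tr Y /\ \tr Y <= 3 * r.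
  rewrite trE; have := (bnd i0 i0, bnd i1 i1, bnd i2 i2).
  case=> [[h1 h2] h3]; move: h1 h2 h3; rewrite !ler_norml; lra.
case: hdY => d1 d2; case: bs => s1 s2.
have E : \tr Y + ((\tr Y) ^+ 2 - r ^+ 2) / 2 + det3 Y = 0.
  rewrite r2; move: hd; rewrite dE; lra.
exact: (scalar_main r0 hr s1 s2 d1 d2 E).
Qed.
End R.


Unset Implicit Arguments.
Theorem mainTheorem3 (R : realType) (k mu L : R) (hk : 0 < k) (hmu : 0 < mu) :
  exists eps : R, exists C3 : R, exists C4 : R,
    0 < eps /\ 0 < C3 /\
    forall C1 C2 : 'M[R]_3,
      inM C1 -> inM C2 ->
      frob (sqrtm C1) < L -> frob (invmx (sqrtm C1)) < L ->
      frob (sqrtm C2) < L -> frob (invmx (sqrtm C2)) < L ->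
      frob (C1 - C2) <= eps ->
      C3 * frob (C1 - C2) <= Dist k mu C1 C2 /\
      Dist k mu C1 C2 <= C4 * frob (C1 - C2).
Proof.
pose K := L ^+ 2 + 1.
have K0 : 0 < K by rewrite /K; have := sqr_ge0 L; lra.
have m16 : 0 < Num.sqrt (mu / 16) by rewrite sqrtr_gt0; lra.
exists (24 * K)^-1, (Num.sqrt (mu / 16) / K), (Num.sqrt (mu / 2) * K).
split; first by rewrite invr_gt0; lra.
split; first by apply: divr_gt0.
move=> C1 C2 hC1 hC2 _ _ hS hT heps.
have [spdS SS] : spd (sqrtm C2) /\ sqrtm C2 *m sqrtm C2 = C2.
  exact: (xgetPex 0 (sqrt_exists hC2)).
move: hS hT; set S := sqrtm C2 => hS hT.
set T := invmx S.
have Su : S \in unitmx by apply: spd_unit.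
have ST : S^T = S by case: spdS.
have TT : T^T = T by rewrite /T trmx_inv ST.
have ST1 : S *m T = 1%:M by rewrite /T mulmxV.
have TS1 : T *m S = 1%:M by rewrite /T mulVmx.
have C2u : C2 \in unitmx by apply: spd_unit; case: hC2.
have iC2 : invmx C2 = T *m T.
  have H : C2 *m (T *m T) = 1%:M by rewrite -SS -mulmxA (mulmxA S T) ST1 mul1mx ST1.
  by rewrite -[LHS]mulmx1 -H mulKmx.
set D := C1 - C2.
set X := T *m C1 *m T.
set Y := X - 1%:M.
have hDY : D = S *m Y *m S.
  rewrite /Y mulmxBr mulmxBl mulmx1 SS /X !mulmxA ST1 mul1mx -mulmxA TS1 mulmx1.
  by [].
have hYD : Y = T *m D *m T.
  rewrite /D mulmxBr mulmxBl -SS !mulmxA TS1 mul1mx -mulmxA ST1 /Y /X.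
  by rewrite mulmxA.
have trE : \tr (C1 *m invmx C2) = \tr X.
  by rewrite iC2 mulmxA mxtrace_mulC /X mulmxA.
have dA : \det (C1 *m invmx C2) = 1.
  rewrite det_mulmx det_inv; case: hC1 => _ ->; case: hC2 => _ ->; by rewrite invr1 mulr1.
have dS : \det S * \det S = 1 by rewrite -det_mulmx SS; case: hC2.
have dS0 : \det S != 0 by rewrite -unitfE -unitmxE.
have detX : \det X = 1.
  rewrite /X !det_mulmx /T det_inv; case: hC1 => _ ->.
  by rewrite mulr1 -invrM ?unitfE // dS invr1.
have XY : X = Y + 1%:M by rewrite /Y subrK.
have hd : det3 (Y + 1%:M) = 1 by rewrite -det3E -XY detX.
have YT : Y^T = Y.
  rewrite /Y linearB /= tr_scalar_mx /X !trmx_mul TT mulmxA.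
  by case: hC1 => [[-> _] _].
have DistE : Dist k mu C1 C2 = Num.sqrt (mu / 2 * \tr Y).
  rewrite /Dist /psi_el dA sqrtr1 ln1 expr0n /= mulr0 add0r powR1 scale1r trE XY.
  by rewrite mxtraceD mxtrace1 addrK.
rewrite DistE.
set r := frob Y; set nD := frob D.
have r0 : 0 <= r := frob_ge0 Y.
have nD0 : 0 <= nD := frob_ge0 D.
have fS0 := frob_ge0 S; have fT0 := frob_ge0 T.
have L2S : frob S * frob S <= K by rewrite /K; nra.
have L2T : frob T * frob T <= K by rewrite /K; nra.
have hnD : nD <= K * r.
  have h1 : nD <= frob S * r * frob S.
    rewrite /nD hDY; apply: (le_trans (frob_mul _ _)).
    by apply: ler_wpM2r => //; apply: frob_mul.
  nra.
have hr : r <= K * nD.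
  have h1 : r <= frob T * nD * frob T.
    rewrite /r hYD; apply: (le_trans (frob_mul _ _)).
    by apply: ler_wpM2r => //; apply: frob_mul.
  nra.
have r24 : r <= 1 / 24.
  have : K * nD <= K * (24 * K)^-1 by apply: ler_wpM2l; [lra | exact: heps].
  have -> : K * (24 * K)^-1 = 1 / 24 by field; lra.
  lra.
have [lo up] := Y_main YT hd r24.
rewrite -/r in lo up.
have trY0 : 0 <= \tr Y by have := sqr_ge0 r; lra.
split.
- have e1 : Num.sqrt (mu / 16) / K * nD <= Num.sqrt (mu / 16) * r.
    rewrite mulrAC ler_pdivrMr //.
    by rewrite -mulrA ler_wpM2l ?(ltW m16) // mulrC.
  apply: (le_trans e1).
  rewrite -(ger0_norm r0) -sqrtr_sqr -sqrtrM; last lra.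
  rewrite ler_sqrt; last by apply: mulr_ge0; lra.
  nra.
- apply: (@le_trans _ _ (Num.sqrt (mu / 2) * r)).
    rewrite -(ger0_norm r0) -sqrtr_sqr -sqrtrM; last lra.
    rewrite ler_sqrt; last by apply: mulr_ge0; [lra | apply: sqr_ge0].
    nra.
  by rewrite -mulrA ler_wpM2l ?sqrtr_ge0 // mulrC.
Qed.
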